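(* For every $V \in \mathrm{SL}_2(\mathbb C)$ and every $l \in \mathbb N$, we have $$\det \sigma_l\big(\mathrm{Ad}(V)\big) = (l+1)\, S_l^2(v), \qquad \text{where } v = \operatorname{tr} V.$$
   Context: Here $\mathrm{Ad}$ denotes the adjoint action of $\mathrm{SL}_2(\mathbb C)$ on its Lie algebra $\mathfrak{sl}_2(\mathbb C)$ of trace-zero $2\times 2$ complex matrices, $\mathrm{Ad}(V)(g) = V g V^{-1}$; thus $\mathrm{Ad}(V)$ is regarded as a $3\times 3$ matrix in $\mathrm{SL}_3(\mathbb C)$ (explicitly, for $V = \begin{bmatrix} e & f\\ g & h\end{bmatrix}$, $\mathrm{Ad}(V) = \begin{bmatrix} e^2 & -2ef & -f^2\\ -eg & eh+fg & fh\\ -g^2 & 2gh & h^2\end{bmatrix}$). For $l \ge 0$ and a square matrix $U$, $\sigma_l(U) = \sum_{i=0}^{l} U^i$. The $S_l(v)$ are the Chebyshev polynomials of the second kind, defined by $S_0(v)=1$, $S_1(v)=v$, and $S_l(v) = v S_{l-1}(v) - S_{l-2}(v)$ for all integers $l$. *)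

(* Defs.v *)
From mathcomp Require Import all_boot all_order all_algebra.
Set Implicit Arguments. Unset Strict Implicit. Unset Printing Implicit Defensive.
Import GRing.Theory Num.Theory.
Local Open Scope ring_scope.

Definition Ad {C : comNzRingType} (V : 'M[C]_2) : 'M[C]_3 :=
  let e := V 0 0 in let f := V 0 1 in let g := V 1 0 in let h := V 1 1 in
  \matrix_(i < 3, j < 3)
    match nat_of_ord i, nat_of_ord j with
    | 0, 0 => e ^+ 2       | 0, 1 => - (2%:R * e * f) | 0, _ => - f ^+ 2
    | 1, 0 => - (e * g)    | 1, 1 => e * h + f * g    | 1, _ => f * h
    | _, 0 => - g ^+ 2     | _, 1 => 2%:R * g * h     | _, _ => h ^+ 2
    end.

Definition sigma {C : comNzRingType} (l : nat) (U : 'M[C]_3) : 'M[C]_3 :=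
  \sum_(i < l.+1) U ^+ i.

Fixpoint cheb2 {C : comNzRingType} (v : C) (l : nat) : C :=
  match l with
  | 0 => 1
  | 1 => v
  | (m.+1 as n).+1 => v * cheb2 v n - cheb2 v m
  end.

(* Main.v *)
Require Import Defs.
From mathcomp Require Import all_boot all_order all_algebra.
From mathcomp Require Import ring.
Set Implicit Arguments. Unset Strict Implicit.
Import GRing.Theory Num.Theory.
Local Open Scope ring_scope.

Lemma w0 : widen_ord (leqnSn 1) ord_max = 0 :> 'I_2. Proof. exact/val_inj. Qed.
Lemma om1 : ord_max = 1 :> 'I_2. Proof. exact/val_inj. Qed.
Lemma l00 : lift 0 (0:'I_1) = 1 :> 'I_2. Proof. exact/val_inj. Qed.
Lemma l10 : lift 1 (0:'I_1) = 0 :> 'I_2. Proof. exact/val_inj. Qed.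

Lemma det2 (R : comNzRingType) (A : 'M[R]_2) : \det A = A 0 0 * A 1 1 - A 0 1 * A 1 0.
Proof.
rewrite (expand_det_row _ 0) !big_ord_recr big_ord0 /= /cofactor !det_mx11 !mxE /=.
rewrite w0 om1 l00 l10 /=; ring.
Qed.
Lemma tr2 (R : comNzRingType) (A : 'M[R]_2) : \tr A = A 0 0 + A 1 1.
Proof. by rewrite /mxtrace !big_ord_recr big_ord0 /= add0r w0 om1. Qed.
Lemma mul2E (R : comNzRingType) (A B : 'M[R]_2) i j : (A *m B) i j = A i 0 * B 0 j + A i 1 * B 1 j.
Proof. by rewrite mxE !big_ord_recr big_ord0 /= add0r w0 om1. Qed.
Section Trig.
Variable R : comNzRingType.
Variable n : nat.

Lemma trigM (A B : 'M[R]_n.+1) : is_trig_mx A -> is_trig_mx B ->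
  is_trig_mx (A * B) /\ forall i, (A * B) i i = A i i * B i i.
Proof.
move=> /is_trig_mxP hA /is_trig_mxP hB; split.
  apply/is_trig_mxP => i j lij; rewrite -mulmxE mxE big1 // => k _.
  case: (ltnP i k) => hik; first by rewrite hA // mul0r.
  by rewrite hB ?mulr0 //; apply: leq_ltn_trans lij.
move=> i; rewrite -mulmxE mxE (bigD1 i) //= big1 ?addr0 // => k hk.
case: (ltngtP i k) => hik; first by rewrite hA // mul0r.
  by rewrite hB ?mulr0.
by move: hk; rewrite (val_inj hik) eqxx.
Qed.

Lemma trigX (A : 'M[R]_n.+1) k : is_trig_mx A ->
  is_trig_mx (A ^+ k) /\ forall i, (A ^+ k) i i = A i i ^+ k.
Proof.
move=> hA; elim: k => [|k [IH1 IH2]].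
  by split; [exact: scalar_mx_is_trig | move=> i; rewrite expr0 mxE eqxx].
have [h1 h2] := trigM hA IH1; split; rewrite exprS //.
by move=> i; rewrite h2 IH2 exprS.
Qed.

Lemma trig_sigma (A : 'M[R]_n.+1) (F : nat -> 'M[R]_n.+1) m :
  (forall k, is_trig_mx (F k)) ->
  is_trig_mx (\sum_(k < m) F k) /\ forall i, (\sum_(k < m) F k) i i = \sum_(k < m) F k i i.
Proof.
move=> hF; split.
  apply/is_trig_mxP => i j lij; rewrite summxE big1 // => k _.
  by have /is_trig_mxP := hF k; apply.
by move=> i; rewrite summxE.
Qed.
End Trig.
Lemma AdM (R : comNzRingType) (X Y : 'M[R]_2) : Ad (X *m Y) = Ad X *m Ad Y.
Proof.
apply/matrixP => i j; rewrite /Ad !mxE !big_ord_recr big_ord0 /= !mxE ?big_ord_recr ?big_ord0 /=.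
have -> : widen_ord (leqnSn 1) ord_max = 0 :> 'I_2 by apply/val_inj.
have -> : ord_max = 1 :> 'I_2 by apply/val_inj.
by case: i => [[|[|[|?]]] hi] //=; case: j => [[|[|[|?]]] hj] //=; ring.
Qed.

Lemma Ad1 (R : comNzRingType) : Ad (1 : 'M[R]_2) = 1.
Proof.
apply/matrixP => i j; rewrite /Ad !mxE /=.
by case: i => [[|[|[|?]]] hi] //=; case: j => [[|[|[|?]]] hj] //=; ring.
Qed.

Lemma eq_via (R : comNzRingType) (x y z : R) : x - y = z -> z = 0 -> x = y.
Proof. by move=> h hz; apply/eqP; rewrite -subr_eq0 h hz. Qed.

Lemma chebsum (R : comNzRingType) (a b : R) : a * b = 1 -> forall l,
  \sum_(k < l.+1) (a^+2)^+k = a^+l * cheb2 (a+b) l.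
Proof.
move=> hab l.
suff: (\sum_(k < l.+1) (a^+2)^+k = a^+l * cheb2 (a+b) l) /\
      (\sum_(k < l.+2) (a^+2)^+k = a^+l.+1 * cheb2 (a+b) l.+1) by case.
elim: l => [|l [IH1 IH2]].
  rewrite !big_ord_recr !big_ord0 /=; split; first ring.
  by apply: (eq_via (z := 1 - a * b)); [ring | rewrite hab subrr].
split; first exact IH2.
have X : (a^+2)^+l.+1 = a^+l.+1 * cheb2 (a+b) l.+1 - a^+l * cheb2 (a+b) l.
  by rewrite -IH1 -IH2 big_ord_recr /=; ring.
have -> : cheb2 (a+b) l.+2 = (a+b) * cheb2 (a+b) l.+1 - cheb2 (a+b) l by [].
set c1 := cheb2 (a+b) l.+1; set c0 := cheb2 (a+b) l.
rewrite big_ord_recr /= IH2 (exprS (a^+2) l.+1) X.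
rewrite -/c1 -/c0; clearbody c1 c0.
by apply: (eq_via (z := (1 - a * b) * (a^+l.+1 * c1))); [rewrite !exprS; ring | rewrite hab subrr mul0r].
Qed.

Lemma lower_case (R : comNzRingType) (T : 'M[R]_2) l : T 0 1 = 0 -> \det T = 1 ->
  \det (sigma l (Ad T)) = l.+1%:R * cheb2 (\tr T) l ^+ 2.
Proof.
move=> h01 hdet.
have trA : is_trig_mx (Ad T).
  apply/is_trig_mxP => i j; rewrite mxE h01.
  by case: i => [[|[|[|?]]] hi] //=; case: j => [[|[|[|?]]] hj] //= _; ring.
have [ts td] := @trig_sigma _ _ (Ad T) (fun k : nat => Ad T ^+ k) l.+1 (fun k => (trigX k trA).1).
have dg : forall i, \sum_(k < l.+1) (Ad T ^+ k) i i = \sum_(k < l.+1) (Ad T i i) ^+ k.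
  by move=> i; apply: eq_bigr => k _; rewrite (trigX k trA).2.
rewrite /sigma (det_trig ts) (eq_bigr (fun i => \sum_(k<l.+1) Ad T i i ^+ k)); last by move=> i _; rewrite td dg.
rewrite (big_ord_recr 2) (big_ord_recr 1) (big_ord_recr 0) big_ord0 /= mul1r !mxE /=.
rewrite det2 h01 mul0r subr0 in hdet.
rewrite h01 mul0r addr0 hdet.
have -> : \sum_(k < l.+1) (1 : R) ^+ k = l.+1%:R.
  by rewrite (eq_bigr (fun _ => 1)) ?sumr_const ?card_ord // => k _; rewrite expr1n.
have hba : T 1 1 * T 0 0 = 1 by rewrite mulrC.
rewrite (chebsum hdet) (chebsum hba) tr2 (addrC (T 1 1)).
transitivity (l.+1%:R * cheb2 (T 0 0 + T 1 1) l ^+ 2 * (T 0 0 ^+ l * T 1 1 ^+ l)); first ring.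
by rewrite -exprMn hdet expr1n mulr1.
Qed.

Lemma conj_sigma (R : comNzRingType) (P Q V : 'M[R]_2) l :
  P *m Q = 1 -> Q *m P = 1 ->
  \det (sigma l (Ad V)) = \det (sigma l (Ad (Q *m V *m P))).
Proof.
move=> hPQ hQP; set T := Q *m V *m P.
have hV : V = P *m T *m Q by rewrite /T !mulmxA hPQ mul1mx -mulmxA hPQ mulmx1.
clearbody T; subst V.
have hA : Ad Q * Ad P = 1 by rewrite -mulmxE -AdM hQP Ad1.
have hA' : Ad P * Ad Q = 1 by rewrite -mulmxE -AdM hPQ Ad1.
rewrite !AdM !mulmxE; set B := Ad T.
have hX : forall k, (Ad P * B * Ad Q) ^+ k = Ad P * B ^+ k * Ad Q.
  elim=> [|k IH]; first by rewrite !expr0 mulr1 hA'.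
  rewrite exprS IH !mulrA -[Ad P * B * Ad Q * Ad P](mulrA _ (Ad Q)) hA mulr1.
  by rewrite exprS !mulrA.
rewrite /sigma (eq_bigr (fun k : 'I_l.+1 => Ad P * B ^+ k * Ad Q)); last by move=> k _; rewrite hX.
rewrite -mulr_suml -mulr_sumr -!mulmxE !det_mulmx.
rewrite mulrAC -det_mulmx mulmxE hA' det1 mul1r.
done.
Qed.

Theorem proposition3p6 (C : numClosedFieldType) (V : 'M[C]_2) (l : nat) :
  \det V = 1 ->
  \det (sigma l (Ad V)) = l.+1%:R * (cheb2 (\tr V) l) ^+ 2.
Proof.
move=> hdet.
have [f0|fn0] := eqVneq (V 0 1) 0; first exact: lower_case.
pose v := V 0 0 + V 1 1.
pose a := (v + sqrtC (v^+2 - 4)) / 2.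
have h2 : (2 : C) != 0 by rewrite pnatr_eq0.
have ha : a^+2 - v * a + 1 = 0.
  transitivity ((sqrtC (v^+2 - 4) ^+ 2 - (v^+2 - 4)) / 4).
    by rewrite /a; field.
  by rewrite sqrtCK subrr mul0r.
pose P : 'M[C]_2 := \matrix_(i < 2, j < 2) match nat_of_ord i, nat_of_ord j with
   | 0, 0 => 0 | 0, _ => V 0 1 | _, 0 => 1 | _, _ => a - V 0 0 end.
pose Q : 'M[C]_2 := \matrix_(i < 2, j < 2) match nat_of_ord i, nat_of_ord j with
   | 0, 0 => (V 0 0 - a) / V 0 1 | 0, _ => 1 | _, 0 => 1 / V 0 1 | _, _ => 0 end.
have hPQ : P *m Q = 1.
  apply/matrixP => i j; rewrite mul2E !mxE /=.
  by case: i => [[|[|?]] hi] //=; case: j => [[|[|?]] hj] //=; field.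
have hQP : Q *m P = 1.
  apply/matrixP => i j; rewrite mul2E !mxE /=.
  by case: i => [[|[|?]] hi] //=; case: j => [[|[|?]] hj] //=; field.
have htr : \tr (Q *m V *m P) = \tr V.
  by rewrite mxtrace_mulC mulmxA hPQ mul1mx.
rewrite (@conj_sigma _ P Q V l hPQ hQP) -htr; apply: lower_case.
  rewrite !mul2E !mxE /=.
  rewrite det2 in hdet.
  apply: (eq_via (z := - (a^+2 - v * a + 1) - (V 0 0 * V 1 1 - V 0 1 * V 1 0 - 1))).
    by rewrite /v; field.
  by rewrite ha hdet !subrr subr0 oppr0.
by rewrite !det_mulmx mulrAC -det_mulmx hQP det1 mul1r.
Qed.
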